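(* Let $\mu>0$, $k>0$, $y(x)=-k(1-x)$, and let $x_l$, $m(x)$ and $N(x,\xi)$ be as in the context. Then $\partial_\xi N(x,\xi)>0$ for every $x\in(x_l,1)$ and every $\xi\in(0,1)$.
   Context: Let $g(u)=u^2(1-u)$ and $G(u)=u^3/3-u^4/4$ for $u\in[0,1]$. Let $x_l\in(0,1)$ be the abscissa of the unique intersection in $(0,1)$ of the line $v=y(u)$ with the curve $v^2=2\mu G(u)$, $v<0$. For $x\in(x_l,1)$, $m(x)\in(0,x)$ is the unique number with $2\mu G(m(x))=2\mu G(x)-y(x)^2$; $m$ is $\mathcal{C}^1$. Define, for $x\in(x_l,1)$ and $\xi\in[0,1]$, writing $z=x-(x-m(x))\xi$, $$N(x,\xi)=(1-m'(x))\bigl(y(x)^2+2\mu(G(z)-G(x))\bigr)-(x-m(x))\Bigl(y(x)y'(x)+\mu\bigl(g(z)\,(1-(1-m'(x))\xi)-g(x)\bigr)\Bigr).$$ *)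

(* Defs.v *)
From Stdlib Require Import Reals.
From Coquelicot Require Import Coquelicot.
Open Scope R_scope.

Definition g (u : R) : R := u ^ 2 * (1 - u).
Definition G (u : R) : R := u ^ 3 / 3 - u ^ 4 / 4.

Definition y (k : R) (x : R) : R := - k * (1 - x).

Definition Nfun (mu k : R) (m : R -> R) (x xi : R) : R :=
  let z := x - (x - m x) * xi in
  let m' := Derive m x in
  (1 - m') * (y k x ^ 2 + 2 * mu * (G z - G x))
  - (x - m x) * (y k x * Derive (y k) x
                 + mu * (g z * (1 - (1 - m') * xi) - g x)).

(* Main.v *)
Require Import Defs.
From Stdlib Require Import Reals Lra Psatz.
From Coquelicot Require Import Coquelicot.
Open Scope R_scope.

Definition Qh (s d m X Y : R) : R := 12*d^3*m^3*X^2*Y + 12*d^3*m^3*X^3 + 20*d^4*m^2*X^2*Y + 8*d^4*m^2*X^3 + 10*d^5*m*X^2*Y + 2*d^5*m*X^3 + 2*d^6*X^2*Y + 4*s*d^2*m^3*Y^3 + 36*s*d^2*m^3*X*Y^2 + 72*s*d^2*m^3*X^2*Y + 40*s*d^2*m^3*X^3 + 9*s*d^3*m^2*Y^3 + 51*s*d^3*m^2*X*Y^2 + 87*s*d^3*m^2*X^2*Y + 33*s*d^3*m^2*X^3 + 6*s*d^4*m*Y^3 + 18*s*d^4*m*X*Y^2 + 46*s*d^4*m*X^2*Y + 10*s*d^4*m*X^3 + 1*s*d^5*Y^3 + 3*s*d^5*X*Y^2 + 10*s*d^5*X^2*Y + 24*s^2*d*m^3*Y^3 + 96*s^2*d*m^3*X*Y^2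 + 120*s^2*d*m^3*X^2*Y + 48*s^2*d*m^3*X^3 + 40*s^2*d^2*m^2*Y^3 + 132*s^2*d^2*m^2*X*Y^2 + 144*s^2*d^2*m^2*X^2*Y + 52*s^2*d^2*m^2*X^3 + 20*s^2*d^3*m*Y^3 + 60*s^2*d^3*m*X*Y^2 + 84*s^2*d^3*m*X^2*Y + 20*s^2*d^3*m*X^3 + 4*s^2*d^4*Y^3 + 12*s^2*d^4*X*Y^2 + 20*s^2*d^4*X^2*Y + 24*s^3*m^3*Y^3 + 72*s^3*m^3*X*Y^2 + 72*s^3*m^3*X^2*Y + 24*s^3*m^3*X^3 + 42*s^3*d*m^2*Y^3 + 114*s^3*d*m^2*X*Y^2 + 102*s^3*d*m^2*X^2*Y + 30*s^3*d*m^2*X^3 + 24*s^3*d^2*m*Y^3 + 72*s^3*d^2*m*X*Y^2 + 60*s^3*d^2*m*X^2*Y + 12*s^3*d^2*m*X^3 + 6*s^3*d^3*Y^3 + 18*s^3*d^3*X*Y^2 + 12*s^3*d^3*X^2*Y.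

Lemma Qh_pos s d m X Y : 0 < s -> 0 < d -> 0 < m -> 0 < X -> 0 < Y -> 0 < Qh s d m X Y.
Proof.
  intros. unfold Qh.
  repeat apply Rplus_lt_0_compat;
  repeat apply Rmult_lt_0_compat; try apply pow_lt; lra.
Qed.

Definition Qexpr (x mm xi : R) : R :=
  let s := 1 - x in let d := x - mm in let z := x - d * xi in
  let Ps6 := 6 * s * g x + 12 * (G x - G mm) in
  let gm6 := 6 * s * g mm in
  (Ps6 - gm6) * g z + d * (2 * z - 3 * z ^ 2) * ((1 - xi) * gm6 + xi * Ps6).

Lemma Qexpr_eq x mm xi : Qexpr x mm xi = (x - mm) * Qh (1 - x) (x - mm) mm xi (1 - xi).
Proof. unfold Qexpr, Qh, g, G; cbv zeta. field. Qed.

Theorem lemmaA2 (mu k xl : R) (m : R -> R) :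
  0 < mu -> 0 < k ->
  0 < xl < 1 -> y k xl < 0 -> (y k xl) ^ 2 = 2 * mu * G xl ->
  (forall x, xl < x < 1 ->
     0 < m x < x /\ 2 * mu * G (m x) = 2 * mu * G x - (y k x) ^ 2) ->
  (forall x, xl < x < 1 -> ex_derive m x /\ continuous (Derive m) x) ->
  forall x xi, xl < x < 1 -> 0 < xi < 1 ->
    Derive (fun t => Nfun mu k m x t) xi > 0.
Proof.
  intros Hmu Hk Hxl _ _ Hm Hd x xi Hx Hxi.
  set (M := Derive m x).
  set (Dy := Derive (y k) x).
  set (mx := m x).
  set (d := x - mx).
  set (z := x - d * xi).
  set (E := - (1 - M) * g z + d * (2 * z - 3 * z ^ 2) * (1 - (1 - M) * xi)).
  assert (HD : Derive (fun t => Nfun mu k m x t) xi = mu * d * E).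
  { apply is_derive_unique. unfold Nfun, g, G. fold M Dy mx.
    auto_derive; auto. unfold E, z, d, g. field. }
  rewrite HD.
  destruct (Hm x Hx) as [[Hm0 Hm1] HG]. fold mx in Hm0, Hm1, HG.
  assert (HA : mu * M * g mx = mu * g x + k ^ 2 * (1 - x)).
  { destruct (Hd x Hx) as [Hex _].
    assert (H1 : is_derive (fun t => 2 * mu * G (m t)) x (2 * mu * (M * g mx))).
    { assert (Hf : is_derive (fun u => 2 * mu * G u) (m x) (2 * mu * g mx)).
      { unfold G, g. fold mx. auto_derive; auto. field. }
      pose proof (is_derive_comp (fun u => 2 * mu * G u) m x _ _ Hf (Derive_correct _ _ Hex)) as Hc.
      replace (2 * mu * (M * g mx)) with (scal (Derive m x) (2 * mu * g mx)).
      exact Hc. unfold scal; simpl; unfold mult; simpl. fold M. ring. }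
    assert (H2 : is_derive (fun t => 2 * mu * G t - (y k t) ^ 2) x (2 * mu * (M * g mx))).
    { apply (is_derive_ext_loc (fun t => 2 * mu * G (m t))); auto.
      apply (locally_interval _ x xl 1); simpl; try lra.
      intros t Ht1 Ht2. apply Hm. lra. }
    assert (H3 : is_derive (fun t => 2 * mu * G t - (y k t) ^ 2) x (2 * mu * g x + 2 * k ^ 2 * (1 - x))).
    { unfold G, g, y. auto_derive; auto. field. }
    pose proof (is_derive_unique _ _ _ H2) as E2.
    pose proof (is_derive_unique _ _ _ H3) as E3.
    rewrite E2 in E3. lra. }
  assert (HG' : k ^ 2 * (1 - x) ^ 2 = 2 * mu * (G x - G mx)).
  { unfold y in HG. nra. }
  assert (Hgm : 0 < g mx).
  { unfold g. apply Rmult_lt_0_compat. nra. lra. }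
  assert (Hs : 0 < 1 - x) by lra.
  assert (Hdp : 0 < d) by (unfold d; lra).
  assert (Hkey : 6 * (1 - x) * mu * g mx * E = mu * Qexpr x mx xi).
  { unfold E, Qexpr; cbv zeta. fold d. fold z.
    transitivity (6 * (1 - x) * ((mu * M * g mx - mu * g mx) * g z
        + d * (2 * z - 3 * z ^ 2) * (mu * g mx * (1 - xi) + (mu * M * g mx) * xi))).
    { ring. }
    rewrite HA.
    transitivity (mu * g mx * (6 * (1 - x)) * (- g z + d * (2 * z - 3 * z ^ 2) * (1 - xi))
       + (6 * (1 - x) * mu * g x + 6 * (k ^ 2 * (1 - x) ^ 2)) * (g z + d * (2 * z - 3 * z ^ 2) * xi)).
    { ring. }
    rewrite HG'. ring. }
  rewrite Qexpr_eq in Hkey.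
  assert (HQ : 0 < Qh (1 - x) (x - mx) mx xi (1 - xi)) by (apply Qh_pos; lra).
  assert (HE : 0 < E).
  { assert (0 < 6 * (1 - x) * mu * g mx * E).
    { rewrite Hkey. apply Rmult_lt_0_compat; auto. apply Rmult_lt_0_compat; lra. }
    assert (0 < 6 * (1 - x) * mu * g mx) by (repeat apply Rmult_lt_0_compat; lra).
    nra. }
  apply Rlt_gt. repeat apply Rmult_lt_0_compat; auto.
Qed.
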